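(* Let $\mathfrak g$ be a finite-dimensional Lie algebra over a field $\mathbb K$ of characteristic zero and let $V=V^2$ be a $\mathfrak g$-module regarded as a dg $\mathfrak g$-module concentrated in degree $2$. A linear map $\alpha_2\colon V^2\to\wedge^2\mathfrak g^\vee\otimes\mathfrak g$ defines a dg Loday–Pirashvili module $\alpha=\{\alpha_2\}$ on $V$ if and only if the corresponding map $\alpha_2\colon\wedge^2\mathfrak g\to\operatorname{Hom}(V^2,\mathfrak g)$ defines an abelian extension of $\mathfrak g$ along $\operatorname{Hom}(V^2,\mathfrak g)$, i.e. is a Chevalley–Eilenberg $2$-cocycle of $\mathfrak g$ with values in the $\mathfrak g$-module $\operatorname{Hom}(V^2,\mathfrak g)$.
   Context: $\operatorname{Hom}(V^2,\mathfrak g)$ is a $\mathfrak g$-module via $(x\cdot\phi)(v)=[x,\phi(v)]-\phi(x\triangleright v)$. For a dg $\mathfrak g$-module $S$, $\Omega_{\mathfrak g}(S)=\wedge^\bullet\mathfrak g^\vee\otimes S$ (degree $p+q$ on $\wedge^p\mathfrak g^\vee\otimes S^q$) carries the total differential $d^S_{\mathrm{tot}}=d^S_{\mathrm{CE}}+d^S$ (Chevalley–Eilenberg differential plus internal differential with sign $(-1)^p$). A dg Loday–Pirashvili module on a non-negative bounded dg $\mathfrak g$-module $V$ is a degree $0$ $\Omega_{\mathfrak g}$-linear map $\alpha\colon\Omega_{\mathfrak g}(V)\to\Omega_{\mathfrak g}(\mathfrak g)$ ($\mathfrak g$ in degree $0$ with adjoint action) with $\alpha\circ d^V_{\mathrm{tot}}=d^{\mathfrak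 g}_{\mathrm{CE}}\circ\alpha$; here $\alpha$ is generated by $\alpha_2$ via $\alpha(\omega\otimes v)=\omega\wedge\alpha_2(v)$. *)

(* Defs.v *)
From HB Require Import structures.
From mathcomp Require Import all_boot all_order all_algebra.
From mathcomp Require Import functions.
Set Implicit Arguments. Unset Strict Implicit. Unset Printing Implicit Defensive.
Import Order.TTheory GRing.Theory Num.Theory.
Local Open Scope ring_scope.

(* Cochains of g with values in S are modelled as functions [seq g -> S];
   a p-cochain (element of wedge^p g^v (x) S, g finite dimensional) is an
   alternating multilinear function on lists of length p. *)

Definition drop_at {T : Type} (i : nat) (xs : seq T) : seq T :=
  take i xs ++ drop i.+1 xs.

Definition sgn {S : zmodType} (i : nat) (s : S) : S := if odd i then - s else s.

Definition lie_bracket (K : fieldType) (g : lmodType K) (br : g -> g -> g) : Prop :=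
  [/\ (forall (a : K) x y z, br (a *: x + y) z = a *: br x z + br y z),
      (forall (a : K) x y z, br z (a *: x + y) = a *: br z x + br z y),
      (forall x, br x x = 0) &
      (forall x y z, br x (br y z) + br y (br z x) + br z (br x y) = 0)].

Definition lie_module (K : fieldType) (g V : lmodType K) (br : g -> g -> g)
    (act : g -> V -> V) : Prop :=
  [/\ (forall (a : K) x y v, act (a *: x + y) v = a *: act x v + act y v),
      (forall (a : K) x v w, act x (a *: v + w) = a *: act x v + act x w) &
      (forall x y v, act (br x y) v = act x (act y v) - act y (act x v))].

Definition is_cochain (K : fieldType) (g S : lmodType K) (p : nat)
    (c : seq g -> S) : Prop :=
  (forall xs ys (a : K) y z, (size xs + size ys).+1 = p ->
     c (xs ++ (a *: y + z) :: ys) = a *: c (xs ++ y :: ys) + c (xs ++ z :: ys)) /\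
  (forall xs ys zs y, size xs + size ys + size zs + 2 = p ->
     c (xs ++ y :: ys ++ y :: zs) = 0).

Definition ce_diff (g : zmodType) (S : zmodType) (br : g -> g -> g)
    (act : g -> S -> S) (c : seq g -> S) : seq g -> S :=
  fun xs =>
    \sum_(i < size xs) sgn i (act (nth 0 xs i) (c (drop_at i xs)))
  + \sum_(i < size xs) \sum_(j < size xs | (i < j)%N)
        sgn (i + j) (c (br (nth 0 xs i) (nth 0 xs j) :: drop_at i (drop_at j xs))).

(* The Omega_g-linear degree-0 map alpha : Omega_g(V) -> Omega_g(g) generated
   by alpha2 : V -> wedge^2 g^v (x) g, alpha(omega (x) v) = omega /\ alpha2(v),
   written on cochains via the (p,2)-shuffle formula:
   alpha(c)(x_0..x_{p+1}) = sum_{a<b} (-1)^(a+b+1) alpha2(c(.. ^x_a .. ^x_b ..))(x_a,x_b) *)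
Definition lp_alpha (g V : zmodType) (alpha2 : V -> g -> g -> g)
    (c : seq g -> V) : seq g -> g :=
  fun xs =>
    \sum_(a < size xs) \sum_(b < size xs | (a < b)%N)
      sgn (a + b + 1) (alpha2 (c (drop_at a (drop_at b xs))) (nth 0 xs a) (nth 0 xs b)).

(* V concentrated in degree 2 (zero internal differential): alpha is a dg
   Loday--Pirashvili module iff alpha o d_tot^V = d_CE^g o alpha, i.e. on every
   p-cochain c (total degree p+2), evaluated on p+3 arguments. *)
Definition dg_LP_module (K : fieldType) (g V : lmodType K) (br : g -> g -> g)
    (act : g -> V -> V) (alpha2 : V -> g -> g -> g) : Prop :=
  forall (p : nat) (c : seq g -> V), is_cochain p c ->
    forall xs : seq g, size xs = p.+3 ->
      lp_alpha alpha2 (ce_diff br act c) xs = ce_diff br br (lp_alpha alpha2 c) xs.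

Definition hom_act (g V : zmodType) (br : g -> g -> g) (act : g -> V -> V)
    (x : g) (phi : V -> g) : V -> g :=
  fun v => br x (phi v) - phi (act x v).

Definition alpha2_hom (g V : zmodType) (alpha2 : V -> g -> g -> g) : seq g -> (V -> g) :=
  fun xs v => alpha2 v (nth 0 xs 0) (nth 0 xs 1).

Definition ce_2cocycle_hom (g V : zmodType) (br : g -> g -> g) (act : g -> V -> V)
    (alpha2 : V -> g -> g -> g) : Prop :=
  forall xs : seq g, size xs = 3 ->
    ce_diff br (hom_act br act) (alpha2_hom alpha2) xs = 0.

(* Main.v *)
Require Import Defs.
From HB Require Import structures.
From mathcomp Require Import all_boot all_order all_algebra.
From mathcomp Require Import functions ssrAC.
Import GRing.Theory.
Local Open Scope ring_scope.

Section PP.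
Variable T : Type.

Fixpoint P1 {S : zmodType} (F : T -> seq T -> S) (xs : seq T) : S :=
  match xs with [::] => 0 | x :: xs' => F x xs' - P1 (fun y r => F y (x :: r)) xs' end.
Fixpoint P2 {S : zmodType} (F : T -> T -> seq T -> S) (xs : seq T) : S :=
  match xs with [::] => 0
  | x :: xs' => - P1 (F x) xs' + P2 (fun y z r => F y z (x :: r)) xs' end.
Fixpoint P3 {S : zmodType} (F : T -> T -> T -> seq T -> S) (xs : seq T) : S :=
  match xs with [::] => 0
  | x :: xs' => P2 (F x) xs' - P3 (fun a b c r => F a b c (x :: r)) xs' end.

Variable S : zmodType.

Lemma P1_ext (F G : T -> seq T -> S) xs : (forall y r, F y r = G y r) -> P1 F xs = P1 G xs.
Proof. by elim: xs F G => [|x xs IH] F G //= E; rewrite E (IH _ (fun y r => G y (x :: r))). Qed.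
Lemma P2_ext (F G : T -> T -> seq T -> S) xs : (forall y z r, F y z r = G y z r) -> P2 F xs = P2 G xs.
Proof.
elim: xs F G => [|x xs IH] F G //= E.
by rewrite (P1_ext _ (G x)) // (IH _ (fun y z r => G y z (x :: r))).
Qed.
Lemma P3_ext (F G : T -> T -> T -> seq T -> S) xs : (forall a b c r, F a b c r = G a b c r) -> P3 F xs = P3 G xs.
Proof.
elim: xs F G => [|x xs IH] F G //= E.
by rewrite (P2_ext _ (G x)) // (IH _ (fun a b c r => G a b c (x :: r))).
Qed.

Lemma P1D (F G : T -> seq T -> S) xs : P1 (fun y r => F y r + G y r) xs = P1 F xs + P1 G xs.
Proof. elim: xs F G => [|x xs IH] F G /=; first by rewrite addr0. rewrite IH. by rewrite opprD addrACA. Qed.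
Lemma P1N (F : T -> seq T -> S) xs : P1 (fun y r => - F y r) xs = - P1 F xs.
Proof. elim: xs F => [|x xs IH] F /=; first by rewrite oppr0. by rewrite IH opprD. Qed.
Lemma P1B (F G : T -> seq T -> S) xs : P1 (fun y r => F y r - G y r) xs = P1 F xs - P1 G xs.
Proof. by rewrite P1D P1N. Qed.
Lemma P2D (F G : T -> T -> seq T -> S) xs : P2 (fun y z r => F y z r + G y z r) xs = P2 F xs + P2 G xs.
Proof. elim: xs F G => [|x xs IH] F G /=; first by rewrite addr0. rewrite IH P1D. by rewrite opprD addrACA. Qed.
Lemma P2N (F : T -> T -> seq T -> S) xs : P2 (fun y z r => - F y z r) xs = - P2 F xs.
Proof. elim: xs F => [|x xs IH] F /=; first by rewrite oppr0. by rewrite IH P1N opprD. Qed.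
Lemma P2B (F G : T -> T -> seq T -> S) xs : P2 (fun y z r => F y z r - G y z r) xs = P2 F xs - P2 G xs.
Proof. by rewrite P2D P2N. Qed.
Lemma P3D (F G : T -> T -> T -> seq T -> S) xs : P3 (fun a b c r => F a b c r + G a b c r) xs = P3 F xs + P3 G xs.
Proof. elim: xs F G => [|x xs IH] F G /=; first by rewrite addr0. rewrite IH P2D. by rewrite opprD addrACA. Qed.
Lemma P3N (F : T -> T -> T -> seq T -> S) xs : P3 (fun a b c r => - F a b c r) xs = - P3 F xs.
Proof. elim: xs F => [|x xs IH] F /=; first by rewrite oppr0. by rewrite IH P2N opprD. Qed.
Lemma P3B (F G : T -> T -> T -> seq T -> S) xs : P3 (fun a b c r => F a b c r - G a b c r) xs = P3 F xs - P3 G xs.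
Proof. by rewrite P3D P3N. Qed.
Lemma P1_0 xs : P1 (fun _ _ => (0 : S)) xs = 0.
Proof. by elim: xs => //= x xs ->; rewrite subr0. Qed.
Lemma P2_0 xs : P2 (fun _ _ _ => (0 : S)) xs = 0.
Proof. by elim: xs => //= x xs ->; rewrite P1_0 oppr0 addr0. Qed.
Lemma P3_0 xs : P3 (fun _ _ _ _ => (0 : S)) xs = 0.
Proof. by elim: xs => //= x xs ->; rewrite P2_0 subr0. Qed.

Lemma L11 (K : T -> T -> seq T -> S) xs :
  P1 (fun a r => P1 (K a) r) xs = P2 (fun y z r => K z y r - K y z r) xs.
Proof.
elim: xs K => [|x xs IH] K //=.
rewrite P1B (IH (fun a u r => K a u (x :: r))) P1B.
rewrite !opprB addrA addrAC //.
Qed.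

Lemma L12 (H : T -> T -> T -> seq T -> S) xs :
  P1 (fun a r => P2 (H a) r) xs =
  P3 (fun X Y Z r => H X Y Z r - H Y X Z r + H Z X Y r) xs.
Proof.
elim: xs H => [|x xs IH] H //=.
rewrite P1D P1N (IH (fun a u w r => H a u w (x :: r))) L11 !P2D !P2N.
rewrite opprD opprK !addrA; congr (_ - _); exact: addrAC.
Qed.

Lemma L21 (H : T -> T -> T -> seq T -> S) xs :
  P2 (fun a b r => P1 (H a b) r) xs =
  P3 (fun X Y Z r => H Y Z X r - H X Z Y r + H X Y Z r) xs.
Proof.
elim: xs H => [|x xs IH] H //=.
rewrite L11 !P2B (IH (fun a b u r => H a b u (x :: r))) !P2D !P2N.
by rewrite opprB addrA; congr (_ - _); rewrite addrC addrA addrAC.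
Qed.

Lemma E12 (K : T -> T -> T -> seq T -> S) xs :
  P1 (fun a r => P2 (K a) r) xs = P2 (fun u w r => P1 (fun a r' => K a u w r') r) xs.
Proof. by rewrite L12 (L21 (fun u w a r => K a u w r)). Qed.

Lemma E22 (H : T -> T -> T -> T -> seq T -> S) xs :
  P2 (fun a b r => P2 (H a b) r) xs =
  P2 (fun u w r => P2 (fun a b r' => H a b u w r') r) xs.
Proof.
elim: xs H => [|x xs IH] H //=.
rewrite !P2D !P2N (IH (fun a b u w r => H a b u w (x :: r))).
rewrite E12 -(E12 (fun w a b r => H a b x w r)).
exact: addrCA.
Qed.

End PP.
Arguments P1 {T S}.
Arguments P2 {T S}.
Arguments P3 {T S}.

Section Morph.
Variables (T : Type) (S S' : zmodType) (f : S -> S').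
Hypothesis fD : forall a b, f (a + b) = f a + f b.
Lemma f0 : f 0 = 0.
Proof. have h : f 0 + f 0 = f 0 + 0 by rewrite -fD !addr0. exact: addrI h. Qed.
Lemma fN a : f (- a) = - f a.
Proof. have /eqP : f (- a) + f a = 0 by rewrite -fD addNr f0. by rewrite addr_eq0 => /eqP. Qed.
Lemma fB a b : f (a - b) = f a - f b.
Proof. by rewrite fD fN. Qed.
Lemma P1_morph (F : T -> seq T -> S) xs : f (P1 F xs) = P1 (fun y r => f (F y r)) xs.
Proof. elim: xs F => [|x xs IH] F /=; first exact: f0. by rewrite fB IH. Qed.
Lemma P2_morph (F : T -> T -> seq T -> S) xs : f (P2 F xs) = P2 (fun y z r => f (F y z r)) xs.
Proof. elim: xs F => [|x xs IH] F /=; first exact: f0. by rewrite fD fN IH P1_morph. Qed.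
End Morph.

Lemma sgnS (S : zmodType) i (s : S) : sgn i.+1 s = - sgn i s.
Proof. by rewrite /sgn /=; case: (odd i); rewrite ?opprK. Qed.
Lemma sgn0 (S : zmodType) (s : S) : sgn 0 s = s.
Proof. by []. Qed.

Lemma drop_at0 (T : Type) (x : T) xs : drop_at 0 (x :: xs) = xs.
Proof. by rewrite /drop_at /= drop0. Qed.
Lemma drop_atS (T : Type) i (x : T) xs : drop_at i.+1 (x :: xs) = x :: drop_at i xs.
Proof. by []. Qed.

Section Conn.
Variables (T S : zmodType).
Lemma P1E (F : T -> seq T -> S) xs :
  \sum_(i < size xs) sgn i (F (nth 0 xs i) (drop_at i xs)) = P1 F xs.
Proof.
elim: xs F => [|x xs IH] F /=; first by rewrite big_ord0.
rewrite big_ord_recl /= drop_at0 -(IH (fun y r => F y (x :: r))) -sumrN.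
congr (_ + _); apply: eq_bigr => i _.
by rewrite /bump leq0n add1n add0n sgnS drop_atS.
Qed.

Lemma P2E (F : T -> T -> seq T -> S) xs :
  \sum_(i < size xs) \sum_(j < size xs | (i < j)%N)
     sgn (i + j) (F (nth 0 xs i) (nth 0 xs j) (drop_at i (drop_at j xs))) = P2 F xs.
Proof.
elim: xs F => [|x xs IH] F /=; first by rewrite big_ord0.
rewrite big_ord_recl; congr (_ + _).
  rewrite big_mkcond big_ord_recl /= add0r -P1E -sumrN; apply: eq_bigr => j _.
  by rewrite /bump leq0n add1n !add0n sgnS drop_atS drop_at0.
rewrite -IH.  apply: eq_bigr => i _.
rewrite big_mkcond big_ord_recl ltn0 Monoid.simpm [RHS]big_mkcond; apply: eq_bigr => j _.
by rewrite !lift0 ltnS addSn addnS !sgnS opprK !drop_atS.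
Qed.
End Conn.

Lemma sgnN (S : zmodType) i (s : S) : sgn i (- s) = - sgn i s.
Proof. by rewrite /sgn; case: (odd i). Qed.

Lemma ceE (g S : zmodType) (br : g -> g -> g) (act : g -> S -> S) (c : seq g -> S) xs :
  ce_diff br act c xs = P1 (fun y r => act y (c r)) xs + P2 (fun y z r => c (br y z :: r)) xs.
Proof. by rewrite /ce_diff (@P1E _ _ (fun y r => act y (c r))) (@P2E _ _ (fun y z r => c (br y z :: r))). Qed.

Lemma lpE (g V : zmodType) (al : V -> g -> g -> g) (c : seq g -> V) xs :
  lp_alpha al c xs = P2 (fun y z r => - al (c r) y z) xs.
Proof.
rewrite /lp_alpha -(@P2E _ _ (fun y z r => - al (c r) y z)); apply: eq_bigr => i _; apply: eq_bigr => j _.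
by rewrite addn1 sgnS sgnN.
Qed.

Lemma rearr (S : zmodType) (bX aX bY aY bZ aZ cXY cXZ cYZ : S) :
 (bX - aX) - ((bY - aY) - (bZ - aZ)) + (-(cXY - cXZ) - cYZ) = 0 ->
 aX - aY + aZ = (bX - bY + bZ) - (cYZ - cXZ + cXY).
Proof.
move=> h; apply/eqP; rewrite eq_sym -subr_eq0 -h; apply/eqP.
rewrite !opprD !opprK !addrA.
by rewrite [LHS](ACl (1*7*2*8*3*9*6*5*4)).
Qed.

Section Main.
Variables (K : fieldType) (g : vectType K) (V : lmodType K)
    (br : g -> g -> g) (act : g -> V -> V) (al : V -> g -> g -> g).

Definition cocP := forall v X Y Z,
  al (act X v) Y Z - al (act Y v) X Z + al (act Z v) X Y =
  (br X (al v Y Z) - br Y (al v X Z) + br Z (al v X Y)) -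
  (al v (br Y Z) X - al v (br X Z) Y + al v (br X Y) Z).

Lemma cocyc : ce_2cocycle_hom br act al -> cocP.
Proof.
move=> H v X Y Z.
have := H [:: X; Y; Z] erefl.
rewrite ceE /= !subr0 !oppr0 !addr0 => /(congr1 (fun f => f v)).
rewrite !fctE /= /hom_act /alpha2_hom /= => h.
exact: rearr h.
Qed.

Hypothesis brD : forall y a b, br y (a + b) = br y a + br y b.
Hypothesis alD : forall a b y z, al (a + b) y z = al a y z + al b y z.
Hypothesis coc : cocP.

Lemma main_id c xs : lp_alpha al (ce_diff br act c) xs = ce_diff br br (lp_alpha al c) xs.
Proof.
have hL : lp_alpha al (ce_diff br act c) xs =
  - P2 (fun a b r => P1 (fun u r' => al (act u (c r')) a b) r) xs
  - P2 (fun a b r => P2 (fun u w r' => al (c (br u w :: r')) a b) r) xs.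
  rewrite lpE -P2N -P2B; apply: P2_ext => a b r.
  rewrite ceE alD opprD (@P1_morph _ _ _ (fun v => al v a b) (fun u w => alD u w a b)).
  by rewrite (@P2_morph _ _ _ (fun v => al v a b) (fun u w => alD u w a b)).
have hR : ce_diff br br (lp_alpha al c) xs =
  - P1 (fun y r => P2 (fun u w r' => br y (al (c r') u w)) r) xs
  + P2 (fun y z r => P1 (fun w r' => al (c r') (br y z) w) r) xs
  - P2 (fun y z r => P2 (fun u w r' => al (c (br y z :: r')) u w) r) xs.
  rewrite ceE -addrA; congr (_ + _).
    rewrite -P1N; apply: P1_ext => y r.
    rewrite lpE (@P2_morph _ _ _ (br y) (brD y)) -P2N; apply: P2_ext => u w r'.
    exact: (@fN _ _ _ (brD y)).
  rewrite -P2N -P2D; apply: P2_ext => y z r.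
  by rewrite lpE /= P1N opprK P2N.
rewrite hL hR (@E22 _ _ (fun a b u w r => al (c (br u w :: r)) a b)).
rewrite (@L21 _ _ (fun a b u r => al (act u (c r)) a b)).
rewrite (@L12 _ _ (fun y u w r => br y (al (c r) u w))).
rewrite (@L21 _ _ (fun y z w r => al (c r) (br y z) w)).
congr (_ - _).
rewrite (@P3_ext _ _ _ (fun X Y Z r => (br X (al (c r) Y Z) - br Y (al (c r) X Z) + br Z (al (c r) X Y))
   - (al (c r) (br Y Z) X - al (c r) (br X Z) Y + al (c r) (br X Y) Z))); last first.
  by move=> X Y Z r; exact: coc.
by rewrite P3B opprB addrC.
Qed.
End Main.

Theorem corollary2p5 (K : fieldType) (g : vectType K) (V : lmodType K)
    (br : g -> g -> g) (act : g -> V -> V) (alpha2 : V -> g -> g -> g) :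
  [pchar K] =i pred0 ->
  lie_bracket br ->
  lie_module br act ->
  (forall (a : K) v w x y, alpha2 (a *: v + w) x y = a *: alpha2 v x y + alpha2 w x y) ->
  (forall v (a : K) x y z, alpha2 v (a *: x + y) z = a *: alpha2 v x z + alpha2 v y z) ->
  (forall v (a : K) x y z, alpha2 v z (a *: x + y) = a *: alpha2 v z x + alpha2 v z y) ->
  (forall v x, alpha2 v x x = 0) ->
  (dg_LP_module br act alpha2 <-> ce_2cocycle_hom br act alpha2).
Proof.
move=> _ [brl brr _ _] _ a2v _ _ _.
have brD : forall y a b, br y (a + b) = br y a + br y b.
  by move=> y a b; have := brr 1 a b y; rewrite !scale1r.
have alD : forall a b y z, alpha2 (a + b) y z = alpha2 a y z + alpha2 b y z.
  by move=> a b y z; have := a2v 1 a b y z; rewrite !scale1r.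
split; last first.
  move=> hC p c _ xs _.
  exact: (@main_id K g V br act alpha2 brD alD (@cocyc K g V br act alpha2 hC)).
move=> hLP xs; case: xs => [|X [|Y [|Z [|? ?]]]] //= _.
apply: boolp.funext => v.
have hc : is_cochain 0 (fun _ : seq g => v).
  split=> [? ? ? ? ? //|xs ys zs y h]; exfalso; move: h.
  by change ((size xs + size ys + size zs + 2)%N = 0%N -> False); rewrite addn2.
have := hLP 0 (fun _ => v) hc [:: X; Y; Z] erefl.
rewrite !(lpE, ceE) /= ?(lpE, ceE) /= ?(lpE, ceE) /= !subr0 !oppr0 !addr0 !opprK => h.
have z0 : forall w : V, (0 : V -> g) w = 0 by [].
rewrite !fctE /= /hom_act /alpha2_hom /= ?z0 ?subr0 ?oppr0 ?addr0.
move/eqP: h; rewrite eq_sym -subr_eq0 => /eqP <-.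
rewrite !opprD !opprK !addrA.
by rewrite [RHS](ACl (1*9*2*8*3*7*4*5*6)).
Qed.
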